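(* Let $(M,d)$ be a complete pointed metric space with $\gamma(M)>1$, where $\gamma(M)=\inf\{\frac{d(x,u)+d(u,y)}{d(x,y)}: x,u,y\in M\text{ distinct}\}$. Then every positive Radon measure $\mu$ on $\beta\widetilde{M}$ with $\|\mu\|=\|\Phi^*\mu\|$ is $\preccurlyeq$-minimal.
   Context: $\mathrm{Lip}_0(M)$: Lipschitz $f:M\to\mathbb{R}$ with $f(0)=0$ ($0$ the base point) normed by the Lipschitz constant. $\widetilde{M}=\{(x,y)\in M\times M:x\ne y\}$, $\beta\widetilde{M}$ its Stone–Čech compactification; Radon measures identified with $C(\beta\widetilde{M})^*$. $\Phi:\mathrm{Lip}_0(M)\to C(\beta\widetilde{M})$ maps $f$ to the continuous extension of $(x,y)\mapsto(f(x)-f(y))/d(x,y)$; $\Phi^*$ its adjoint. $G$ is the set of $g\in C(\beta\widetilde{M})$ with $d(x,y)g(x,y)\le d(x,u)g(x,u)+d(u,y)g(u,y)$ for all distinct $x,u,y\in M$; $\mu\preccurlyeq\nu$ iff $\int g\,d\mu\le\int g\,d\nu$ for all $g\in G$; $\mu$ is $\preccurlyeq$-minimal if every positive $\nu\preccurlyeq\mu$ satisfies $\mu\preccurlyeq\nu$. Throughout, $M$ has at least three distinct points. *)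

(* Defs.v *)
From mathcomp Require Import all_boot all_order all_algebra.
From mathcomp Require Import boolp classical_sets reals.
Set Implicit Arguments. Unset Strict Implicit. Unset Printing Implicit Defensive.
Import Order.TTheory GRing.Theory Num.Theory.
Local Open Scope ring_scope.
Local Open Scope classical_set_scope.

Section Defs.
Variables (R : realType) (M : Type) (d : M -> M -> R).

Definition is_metric : Prop :=
  [/\ forall x y, (d x y = 0) <-> x = y,
      forall x y, d x y = d y x &
      forall x y z, d x z <= d x y + d y z].

Definition d_cauchy (u : nat -> M) : Prop :=
  forall e : R, 0 < e -> exists N, forall m n, (N <= m)%N -> (N <= n)%N -> d (u m) (u n) < e.
Definition d_converges (u : nat -> M) (l : M) : Prop :=
  forall e : R, 0 < e -> exists N, forall n, (N <= n)%N -> d (u n) l < e.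
Definition complete_metric : Prop :=
  forall u, d_cauchy u -> exists l, d_converges u l.

Definition gammaM : R :=
  inf [set r | exists x u y, [/\ x <> u, u <> y, x <> y &
                  r = (d x u + d u y) / d x y]].

(** Functions on Mtilde = {(x,y) : x <> y} are represented as M -> M -> R;
    only their values off the diagonal matter.  C(beta Mtilde) is identified
    (isometrically, via the universal property of the Stone-Cech
    compactification) with Cb(Mtilde), the bounded continuous functions on
    Mtilde (Mtilde carrying the product-metric topology). *)
Definition Cb (g : M -> M -> R) : Prop :=
  (exists C : R, forall x y, x <> y -> `|g x y| <= C) /\
  (forall x y, x <> y -> forall e : R, 0 < e -> exists2 dl : R, 0 < dl &
     forall x' y', x' <> y' -> d x x' < dl -> d y y' < dl ->
       `|g x' y' - g x y| < e).

Definition sup_le (g : M -> M -> R) (c : R) : Prop :=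
  forall x y, x <> y -> `|g x y| <= c.

(** Radon measures on beta Mtilde = C(beta Mtilde)^* = Cb(Mtilde)^*:
    continuous linear functionals (their values outside Cb are irrelevant). *)
Definition radon (mu : (M -> M -> R) -> R) : Prop :=
  (forall (a : R) g h, Cb g -> Cb h ->
      mu (fun x y => a * g x y + h x y) = a * mu g + mu h) /\
  (exists K : R, forall g c, Cb g -> sup_le g c -> `|mu g| <= K * c).

Definition positive_radon (mu : (M -> M -> R) -> R) : Prop :=
  radon mu /\
  forall g, Cb g -> (forall x y, x <> y -> 0 <= g x y) -> 0 <= mu g.

Definition mnorm (mu : (M -> M -> R) -> R) : R :=
  sup [set r | exists g, [/\ Cb g, sup_le g 1 & r = `|mu g|]].

Definition lip_ball1 (p : M) (f : M -> R) : Prop :=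
  f p = 0 /\ forall x y, `|f x - f y| <= d x y.

Definition Phi (f : M -> R) : M -> M -> R := fun x y => (f x - f y) / d x y.

Definition Phistar_norm (p : M) (mu : (M -> M -> R) -> R) : R :=
  sup [set r | exists f, lip_ball1 p f /\ r = `|mu (Phi f)|].

Definition in_G (g : M -> M -> R) : Prop :=
  Cb g /\ forall x u y, x <> u -> u <> y -> x <> y ->
    d x y * g x y <= d x u * g x u + d u y * g u y.

Definition preceq (mu nu : (M -> M -> R) -> R) : Prop :=
  forall g, in_G g -> mu g <= nu g.

Definition preceq_minimal (mu : (M -> M -> R) -> R) : Prop :=
  forall nu, positive_radon nu -> preceq nu mu -> preceq mu nu.

End Defs.

(* Main.v *)
Require Import Defs.
From mathcomp Require Import all_boot all_order all_algebra.
From mathcomp Require Import boolp classical_sets reals.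
From mathcomp Require Import ring lra.
Import Order.TTheory GRing.Theory Num.Theory.
Local Open Scope ring_scope.

Section Helpers.
Variables (R : realType) (M : Type) (d : M -> M -> R).
Hypothesis Hmet : is_metric d.

Lemma d_ge0 x y : 0 <= d x y.
Proof.
case: Hmet => H0 Hs Ht; have := Ht x y x.
rewrite (proj2 (H0 x x) erefl) (Hs y x); lra.
Qed.

Lemma d_gt0 x y : x <> y -> 0 < d x y.
Proof.
case: Hmet => H0 _ _.
move=> nxy; rewrite lt_def d_ge0 andbT; apply/eqP => /(proj1 (H0 x y)).
exact: nxy.
Qed.

Lemma Cb_lin a g h : Cb d g -> Cb d h -> Cb d (fun x y => a * g x y + h x y).
Proof.
move=> [[Cg Hg] Hgc] [[Ch Hh] Hhc]; split.
  exists (`|a| * Cg + Ch) => x y nxy.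
  apply: le_trans (ler_normD _ _) _; apply: lerD; last exact: Hh.
  rewrite normrM ler_wpM2l //.
  exact: Hg.
move=> x y nxy e e0.
have e1 : 0 < e / (2 * (`|a| + 1)).
  by apply: divr_gt0 => //; apply: mulr_gt0 => //; apply: ltr_pwDr.
have e2 : 0 < e / 2 by apply: divr_gt0.
case: (Hgc x y nxy _ e1) => dg dg0 Hdg.
case: (Hhc x y nxy _ e2) => dh dh0 Hdh.
exists (Num.min dg dh); first by rewrite lt_min dg0 dh0.
move=> x' y' n'; rewrite !lt_min => /andP[h1 h1'] /andP[h2 h2'].
have A := Hdg _ _ n' h1 h2. have B := Hdh _ _ n' h1' h2'.
have -> : a * g x' y' + h x' y' - (a * g x y + h x y) =
  a * (g x' y' - g x y) + (h x' y' - h x y) by ring.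
apply: le_lt_trans (ler_normD _ _) _; rewrite normrM.
have ap : 0 < 2 * (`|a| + 1) by apply: mulr_gt0 => //; apply: ltr_pwDr.
move: A; rewrite ltr_pdivlMr //.
have := normr_ge0 a; have := normr_ge0 (g x' y' - g x y).
set X := `|g x' y' - g x y|; set Y := `|a|; move: B; set Z := `|_|.
move=> *; nra.
Qed.

Lemma Cb_const c : Cb d (fun _ _ => c).
Proof.
split; first by exists `|c|.
move=> x y _ e e0; exists 1 => // *; by rewrite subrr normr0.
Qed.

Lemma Phi_le1 p f x y : lip_ball1 d p f -> x <> y -> `|Phi d f x y| <= 1.
Proof.
move=> [_ Hf] nxy; rewrite /Phi normrM normfV (ger0_norm (d_ge0 x y)).
rewrite ler_pdivrMr ?d_gt0 // mul1r; exact: Hf.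
Qed.


Lemma Cb_Phi p f : lip_ball1 d p f -> Cb d (Phi d f).
Proof.
move=> Hl; split; first by exists 1 => x y nxy; exact: (Phi_le1 _ _ _ _ Hl nxy).
case: Hmet => H0 Hs Ht; case: (Hl) => _ Hf.
move=> x y nxy e e0.
have D0 := d_gt0 _ _ nxy; set D := d x y in D0 *.
have dl0 : 0 < Num.min (D / 4) (e * D / 16).
  by rewrite lt_min !divr_gt0 // mulr_gt0.
exists (Num.min (D / 4) (e * D / 16)) => // x' y' n' h1 h2.
move: h1 h2; rewrite !lt_min => /andP[h1 h1'] /andP[h2 h2'].
have D'0 := d_gt0 _ _ n'; set D' := d x' y' in D'0 *.
have t1 : D' <= d x x' + D + d y y'.
  have := Ht x' x y'; have := Ht x y y'; rewrite (Hs x' x) /D' /D; lra.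
have t2 : D <= d x x' + D' + d y y'.
  have := Ht x x' y; have := Ht x' y' y; rewrite (Hs y' y) /D' /D; lra.
have l1 : `|f x' - f x| <= d x x' by rewrite -(Hs x' x); exact: Hf.
have l2 : `|f y' - f y| <= d y y' by rewrite -(Hs y' y); exact: Hf.
have l3 : `|f x - f y| <= D by exact: Hf.
have g1 := d_ge0 x x'; have g2 := d_ge0 y y'.
rewrite /Phi -/D -/D'.
have -> : (f x' - f y') / D' - (f x - f y) / D =
   (((f x' - f x) - (f y' - f y)) * D - (f x - f y) * (D' - D)) / (D * D').
  by field; apply/andP; split; rewrite gt_eqF.
have DD0 : 0 < D * D' by apply: mulr_gt0.
rewrite normrM normfV (gtr0_norm DD0) ltr_pdivrMr //.
set s := d x x' + d y y'.
have hs : `|D' - D| <= s by rewrite ler_norml /s; apply/andP; split; lra.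
have ha : `|(f x' - f x) - (f y' - f y)| <= s.
  apply: le_trans (ler_normB _ _) _; rewrite /s; lra.
have hN : `|((f x' - f x) - (f y' - f y)) * D - (f x - f y) * (D' - D)|
    <= s * D + D * s.
  apply: le_trans (ler_normB _ _) _; rewrite !normrM (gtr0_norm D0).
  apply: lerD; first by rewrite ler_wpM2r // ltW.
  by apply: ler_pM => //.
apply: le_lt_trans hN _.
have sD : s < D / 2 by rewrite /s; lra.
have se : s < e * D / 8 by rewrite /s; lra.
have D'D : D / 2 < D' by lra.
have : s * D < e * D / 8 * D by rewrite ltr_pM2r.
have : e * D * (D / 2) < e * D * D' by rewrite ltr_pM2l // mulr_gt0.
have : 0 < e * D * D by rewrite !mulr_gt0.
move=> h3 h4 h5.
have -> : s * D + D * s = 2 * (s * D) by ring.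
have -> : e * (D * D') = e * D * D' by ring.
rewrite (_ : e * D * (D / 2) = (e * D * D) / 2) in h4; last by ring.
rewrite (_ : e * D / 8 * D = (e * D * D) / 8) in h5; last by ring.
lra.
Qed.

Lemma Cb_comb a b g h : Cb d g -> Cb d h -> Cb d (fun x y => a * g x y + b * h x y).
Proof.
move=> Cg Ch.
have Cbh : Cb d (fun x y => b * h x y).
  have -> : (fun x y => b * h x y) = (fun x y => b * h x y + (fun _ _ => 0) x y)
    by apply/funext => x; apply/funext => y; rewrite addr0.
  exact: Cb_lin (Cb_const 0).
exact: Cb_lin Cg Cbh.
Qed.

Lemma gamma_le x u y : x <> u -> u <> y -> x <> y ->
  gammaM d * d x y <= d x u + d u y.
Proof.
move=> a b c.
have h : gammaM d <= (d x u + d u y) / d x y.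
  rewrite /gammaM; apply: ge_inf.
    exists 0 => r [x' [u' [y' [_ _ _ ->]]]].
    by rewrite divr_ge0 ?addr_ge0 ?d_ge0.
  by exists x, u, y.
by rewrite -ler_pdivlMr ?d_gt0.
Qed.

Section Radon.
Variable nu : (M -> M -> R) -> R.
Hypothesis Hr : radon d nu.

Lemma radon0 : nu (fun _ _ => 0) = 0.
Proof.
case: Hr => Hlin _.
have := Hlin 1 (fun _ _ => 0) (fun _ _ => 0) (Cb_const 0) (Cb_const 0).
have -> : (fun x y : M => 1 * (fun _ _ : M => 0 : R) x y + (fun _ _ : M => 0 : R) x y)
   = (fun _ _ => 0) by apply/funext => x; apply/funext => y; rewrite mul1r addr0.
lra.
Qed.

Lemma radon_scale b h : Cb d h -> nu (fun x y => b * h x y) = b * nu h.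
Proof.
case: Hr => Hlin _ Ch.
have := Hlin b h (fun _ _ => 0) Ch (Cb_const 0).
have -> : (fun x y : M => b * h x y + (fun _ _ : M => 0 : R) x y)
   = (fun x y => b * h x y) by apply/funext => x; apply/funext => y; rewrite addr0.
by rewrite radon0 addr0.
Qed.

Lemma radon_comb a b g h : Cb d g -> Cb d h ->
  nu (fun x y => a * g x y + b * h x y) = a * nu g + b * nu h.
Proof.
case: Hr => Hlin _ Cg Ch.
have Cbh : Cb d (fun x y => b * h x y).
  have -> : (fun x y => b * h x y) = (fun x y => b * h x y + (fun _ _ => 0) x y)
    by apply/funext => x; apply/funext => y; rewrite addr0.
  exact: Cb_lin (Cb_const 0).
have := Hlin a g (fun x y => b * h x y) Cg Cbh.
rewrite radon_scale //.
Qed.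

End Radon.

End Helpers.

Arguments d_ge0 {R M d} Hmet x y.
Arguments d_gt0 {R M d} Hmet {x y}.
Arguments Cb_lin {R M d} a {g h}.
Arguments Cb_const {R M d} c.
Arguments Phi_le1 {R M d} Hmet {p f x y}.
Arguments Cb_Phi {R M d} Hmet {p f}.
Arguments Cb_comb {R M d} a b {g h}.
Arguments gamma_le {R M d} Hmet {x u y}.
Arguments radon_comb {R M d nu} Hr a b {g h}.

Unset Implicit Arguments.

Theorem corollary3p18 (R : realType) (M : Type) (d : M -> M -> R) (p : M)
  (Hmet : is_metric d) (Hcomp : complete_metric d)
  (H3 : exists x u y : M, [/\ x <> u, u <> y & x <> y])
  (Hgamma : 1 < gammaM d)
  (mu : (M -> M -> R) -> R) (Hmu : positive_radon d mu)
  (Hnorm : mnorm d mu = Phistar_norm d p mu) :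
  preceq_minimal d mu.
Proof.
move=> nu [Hrnu Hpos] Hpre.
have Hrmu := Hmu.1; have Hmupos := Hmu.2.
case: (Hmet) => H0 Hs Ht.
pose one := fun _ _ : M => 1 : R.
have C1 : Cb d one by apply: Cb_const.
have G1 : in_G d one.
  split => // x u y _ _ _; rewrite /one !mulr1; exact: Ht.
have E : forall f, lip_ball1 d p f -> nu (Phi d f) = mu (Phi d f).
  move=> f Hf; have CP := Cb_Phi Hmet Hf.
  have key : forall x y, x <> y -> d x y * Phi d f x y = f x - f y.
    move=> x y nxy; rewrite /Phi mulrC divfK // gt_eqF //; exact: d_gt0.
  have G : in_G d (Phi d f).
    split => // x u y a b c; rewrite !key //; lra.
  have Gn : in_G d (fun x y => (-1) * Phi d f x y + 0 * one x y).
    split; first exact: Cb_comb.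
    move=> x u y a b c; rewrite /one !mul0r !addr0 !mulN1r !mulrN !key //; lra.
  have := Hpre _ G; have := Hpre _ Gn.
  rewrite (radon_comb Hrnu) // (radon_comb Hrmu) //; lra.
have S2 : mu one <= nu one.
  case: (Hrmu) => _ [Km HKm].
  have le1 : mu one <= mnorm d mu.
    apply: le_trans (ler_norm (mu one)) _.
    rewrite /mnorm.
    set Es := (X in sup X).
    have hE : Es `|mu one|.
      exists one; split => //.
      by move=> x y _; rewrite /one normr1.
    have : has_sup Es.
      split; first by exists `|mu one|.
      exists Km => r [g [Cg Hg ->]].
      by have := HKm g 1 Cg Hg; rewrite mulr1.
    by move=> /sup_upper_bound; apply.
  rewrite Hnorm in le1; apply: le_trans le1 _.
  apply: ge_sup.
    exists `|mu (Phi d (fun _ => 0))|, (fun _ => 0); split => //.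
    by split => // x y; rewrite subrr normr0 d_ge0.
  move=> r [f [Hf ->]]; rewrite -E // ler_norml.
  have CP := Cb_Phi Hmet Hf.
  have := Hpos (fun x y => 1 * one x y + (-1) * Phi d f x y) (Cb_comb _ _ C1 CP).
  have := Hpos (fun x y => 1 * one x y + 1 * Phi d f x y) (Cb_comb _ _ C1 CP).
  rewrite !(radon_comb Hrnu) //.
  have B x y : x <> y -> -1 <= Phi d f x y <= 1.
    by move=> nxy; rewrite -ler_norml (Phi_le1 Hmet Hf nxy).
  move=> h1 h2.
  have {}h1 : 0 <= 1 * nu one + 1 * nu (Phi d f).
    apply: h1 => x y nxy; have /andP[b1 b2] := B x y nxy; rewrite /one; lra.
  have {}h2 : 0 <= 1 * nu one + (-1) * nu (Phi d f).
    apply: h2 => x y nxy; have /andP[b1 b2] := B x y nxy; rewrite /one; lra.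
  apply/andP; split; lra.
have S3 : nu one <= mu one by exact: Hpre.
move=> g Gg; case: (Gg) => Cg _; case: (Cg) => [[C0 HC0] _].
pose B := `|C0|.
have B0 : 0 <= B by exact: normr_ge0.
have HB x y : x <> y -> forall t, 0 <= t -> -(B * t) <= t * g x y <= B * t.
  move=> nxy t t0; rewrite -ler_norml normrM (ger0_norm t0) mulrC ler_wpM2r //.
  exact: le_trans (HC0 x y nxy) (ler_norm _).
pose gam := gammaM d.
have g1 : 1 < gam by exact: Hgamma.
pose C := 2 * B * gam / (gam - 1).
have C0' : 0 <= C by rewrite /C divr_ge0 ?mulr_ge0 //; lra.
have CE : C * (gam - 1) = 2 * B * gam by rewrite /C divfK // gt_eqF // subr_gt0.
have Gh : in_G d (fun x y => (-1) * g x y + C * one x y).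
  split; first exact: Cb_comb.
  move=> x u y a b c; rewrite /one !mulr1.
  have gl := gamma_le Hmet a b c; rewrite -/gam in gl.
  have t0 := d_ge0 Hmet x y.
  have s10 := d_ge0 Hmet x u.
  have s20 := d_ge0 Hmet u y.
  have /andP[p1 _] := HB x y c _ t0.
  have /andP[_ p2] := HB x u a _ s10.
  have /andP[_ p3] := HB u y b _ s20.
  set t := d x y in gl t0 p1 *; set s1 := d x u in gl s10 p2 *.
  set s2 := d u y in gl s20 p3 *.
  have key : 2 * B * (s1 + s2) <= C * ((s1 + s2) - t).
    have gp : 0 < gam by lra.
    rewrite -(ler_pM2l gp).
    have : 0 <= C * ((s1 + s2) - gam * t) by rewrite mulr_ge0 //; lra.
    have -> : gam * (2 * B * (s1 + s2)) = C * (gam - 1) * (s1 + s2) by rewrite CE; ring.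
    move=> h; have -> : gam * (C * ((s1 + s2) - t)) =
       C * (gam - 1) * (s1 + s2) + C * ((s1 + s2) - gam * t) by ring.
    lra.
  have ts : t <= s1 + s2.
    have : t <= gam * t by rewrite ler_peMl //; lra.
    lra.
  have : B * t <= B * (s1 + s2) by rewrite ler_wpM2l.
  move=> h.
  have -> : t * (-1 * g x y + C) = - (t * g x y) + C * t by ring.
  have -> : s1 * (-1 * g x u + C) = - (s1 * g x u) + C * s1 by ring.
  have -> : s2 * (-1 * g u y + C) = - (s2 * g u y) + C * s2 by ring.
  rewrite (_ : C * (s1 + s2 - t) = C * s1 + C * s2 - C * t) in key; last by ring.
  rewrite (_ : B * (s1 + s2) = B * s1 + B * s2) in h; last by ring.
  rewrite (_ : 2 * B * (s1 + s2) = 2 * (B * s1) + 2 * (B * s2)) in key; last by ring.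
  lra.
have := Hpre _ Gh.
rewrite (radon_comb Hrnu) // (radon_comb Hrmu) //.
have : nu one = mu one by apply/le_anti/andP.
move=> ->.
lra.
Qed.
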